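(* Let $(\mathcal S,\mathcal A,P,R,d_0)$ be a finite episodic MDP with horizon $T$ and $\pi_\theta$ a parameterized policy satisfying the score bound described in the context. Then there exists a finite constant $L_e$ such that for all $\gamma\in[0,1]$ (and all $\theta$), $$\Big\|\sum_{s\in\mathcal S}V^{\pi_\theta}_\gamma(s)\,\frac{\partial}{\partial\theta}d^{\pi_\theta}_\gamma(s)\Big\|\le(1-\gamma)L_e.$$
   Context: Setting: $\mathcal S$ is a finite set of states, $\mathcal A$ a finite set of actions, $P(s'\mid s,a)$ a transition function, $R(\cdot\mid s,a,s')$ a reward distribution supported in $[-R_{\max},R_{\max}]$, and $d_0$ an initial state distribution. There is a terminal absorbing state in which the agent stays and receives reward $0$. An episode: $S_0\sim d_0$; at each time $t$, $A_t\sim\pi_\theta(\cdot\mid S_t)$, $S_{t+1}\sim P(\cdot\mid S_t,A_t)$, $R_t\sim R(\cdot\mid S_t,A_t,S_{t+1})$; the horizon $T$ is fixed and $S_T$ is terminal. The policy $\pi_\theta(a\mid s)$ is positive and differentiable in $\theta\in\mathbb R^n$, and there is a constant $L_\pi$ with $\big\|\frac{\partial}{\partial\theta}\ln\pi_\theta(a\mid s)\big\|\le L_\pi$ for all $\theta,s,a$. Probabilities and expectations are under $\pi=\pi_\theta$. For $\gamma\in[0,1]$ (with $0^0=1$), $V^{\pi_\theta}_\gamma(s)=\mathbb E\big[\sum_{i=t}^{T}\gamma^{i-t}R_i\,\big|\,S_t=s\big]$, treated as a function of $s$ alone (the conditional expectation is assumed not to depend on $t$), and $d^{\pi_\theta}_\gamma(s)=d_0(s)+(1-\gamma)\sum_{t=1}^{T-1}\Pr(S_t=s)$.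 *)

(* Defs.v *)
From HB Require Import structures.
From mathcomp Require Import all_boot all_order all_algebra.
From mathcomp Require Import all_classical all_reals all_analysis.
Set Implicit Arguments. Unset Strict Implicit. Unset Printing Implicit Defensive.
Import Order.TTheory GRing.Theory Num.Theory.
Import numFieldNormedType.Exports.
Local Open Scope ring_scope.

Section MDP.
Variables (R : realType) (S A : finType) (n T : nat).

Definition euclid (x : 'rV[R]_n) : R := Num.sqrt (\sum_(i < n) x ord0 i ^+ 2).

Definition grad (f : 'rV[R]_n -> R) (th : 'rV[R]_n) : 'rV[R]_n :=
  \row_(i < n) derive f th (delta_mx 0 i).

(* trajectories: states S_0..S_{T+1}, actions A_0..A_T *)
Definition traj := ({ffun 'I_T.+2 -> S} * {ffun 'I_T.+1 -> A})%type.
Definition st (tau : traj) (t : nat) : S := tau.1 (inord t).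
Definition ac (tau : traj) (t : nat) : A := tau.2 (inord t).

Variables (P : S -> A -> S -> R) (d0 : S -> R) (r : S -> A -> S -> R)
          (pi : 'rV[R]_n -> S -> A -> R).

Definition pathprob (th : 'rV[R]_n) (tau : traj) : R :=
  d0 (st tau 0) * \prod_(t < T.+1)
    (pi th (st tau t) (ac tau t) * P (st tau t) (ac tau t) (st tau t.+1)).

Definition PrSt (th : 'rV[R]_n) (t : nat) (s : S) : R :=
  \sum_(tau : traj) pathprob th tau * (st tau t == s)%:R.

(* E[ sum_{i=t}^T gamma^(i-t) R_i ; S_t = s ] (R_i replaced by its mean r) *)
Definition retSt (th : 'rV[R]_n) (g : R) (t : nat) (s : S) : R :=
  \sum_(tau : traj) pathprob th tau * (st tau t == s)%:R *
    \sum_(t <= i < T.+1) g ^+ (i - t) * r (st tau i) (ac tau i) (st tau i.+1).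

Definition condret (th : 'rV[R]_n) (g : R) (t : nat) (s : S) : R :=
  retSt th g t s / PrSt th t s.

(* V_gamma(s): the conditional expectation at any time t <= T where S_t = s
   has positive probability (assumed independent of t); 0 if never reached *)
Definition Vg (th : 'rV[R]_n) (g : R) (s : S) : R :=
  match [pick t : 'I_T.+1 | 0 < PrSt th t s] with
  | Some t => condret th g t s
  | None => 0
  end.

Definition dg (th : 'rV[R]_n) (g : R) (s : S) : R :=
  d0 s + (1 - g) * \sum_(1 <= t < T) PrSt th t s.

End MDP.

(* Main.v *)
Require Import Defs.
From HB Require Import structures.
From mathcomp Require Import all_boot all_order all_algebra.
From mathcomp Require Import all_classical all_reals all_analysis.
Import Order.TTheory GRing.Theory Num.Theory.
Import numFieldNormedType.Exports.
Local Open Scope ring_scope.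


Set Implicit Arguments. Unset Strict Implicit.
Section H.
Variables (R : realType) (n : nat).
Local Notation V := 'rV[R]_n.

Lemma dln (f : V -> R) x v : differentiable f x -> 0 < f x ->
  'D_v (fun y => ln (f y)) x = 'D_v f x / f x.
Proof.
move=> df fx0.
have dl : differentiable (@ln R) (f x).
  by apply/derivable1_diffP; apply: ex_derive; exact: is_derive1_ln.
rewrite (deriveE v (differentiable_comp df dl)) (deriveE v df).
rewrite diff_comp //=.
have -> : 'd f x v = 'd f x v *: (1 : R) by rewrite scaler1.
rewrite linearZ /= -deriveE // -(deriveE (1:R) dl).
have [_ ->] := is_derive1_ln fx0.
by rewrite [_%:A]mulr1.
Qed.

Definition DB (f : V -> R) x v B := derivable f x v /\ `|'D_v f x| <= B.

Lemma DB_sum (I : Type) (r : seq I) (F : I -> V -> R) (B : I -> R) x v :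
  (forall i, DB (F i) x v (B i)) ->
  DB (fun y => \sum_(i <- r) F i y) x v (\sum_(i <- r) B i).
Proof.
move=> H; elim: r => [|a r [IH1 IH2]].
  have -> : (fun y => \sum_(i <- [::]) F i y) = cst 0.
    by apply/funext => y; rewrite big_nil.
  by split; [exact: derivable_cst|rewrite derive_cst big_nil normr0].
have -> : (fun y => \sum_(i <- a :: r) F i y) = F a + (fun y => \sum_(i <- r) F i y).
  by apply/funext => y; rewrite big_cons.
have [Ha1 Ha2] := H a.
split; first exact: derivableD.
rewrite deriveD // big_cons (le_trans (ler_normD _ _)) // lerD //.
Qed.

Lemma DB_mul (f g : V -> R) x v a b Bf Bg :
  DB f x v Bf -> DB g x v Bg -> `|f x| <= a -> `|g x| <= b ->
  0 <= Bf -> 0 <= Bg ->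
  DB (fun y => f y * g y) x v (a * Bg + b * Bf).
Proof.
move=> [f1 f2] [g1 g2] fa gb Bf0 Bg0.
have -> : (fun y => f y * g y) = f * g by [].
split; first exact: derivableM.
rewrite deriveM // (le_trans (ler_normD _ _)) // lerD //.
  rewrite normrM; apply: ler_pM => //.
rewrite normrM; apply: ler_pM => //.
Qed.

Lemma DB_cst (c : R) x v : DB (fun _ => c) x v 0.
Proof.
have -> : (fun _ : V => c) = cst c by [].
by split; [exact: derivable_cst|rewrite derive_cst normr0].
Qed.

Lemma DB_le f x v B B' : B <= B' -> DB f x v B -> DB f x v B'.
Proof. by move=> h [? h2]; split => //; exact: le_trans h. Qed.

Lemma DB_prod m (F : 'I_m -> V -> R) x v B :
  0 <= B -> (forall i, DB (F i) x v B) -> (forall i, `|F i x| <= 1) ->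
  DB (fun y => \prod_(i < m) F i y) x v (m%:R * B).
Proof.
move=> B0; elim: m F => [|m IH] F H1 H2.
  have -> : (fun y => \prod_(i < 0) F i y) = (fun _ => 1).
    by apply/funext => y; rewrite big_ord0.
  by rewrite mul0r; exact: DB_cst.
have -> : (fun y => \prod_(i < m.+1) F i y) =
   (fun y => (\prod_(i < m) F (widen_ord (leqnSn m) i) y) * F ord_max y).
  by apply/funext => y; rewrite big_ord_recr.
apply: DB_le; last first.
  apply: DB_mul; [exact: IH|exact: H1| |exact: H2| |exact B0].
  - rewrite normr_prod; apply: prodr_ile1 => i _; rewrite normr_ge0; exact: H2.
  - by rewrite mulr_ge0.
by rewrite !mul1r -addn1 natrD mulrDl mul1r addrC.
Qed.
End H.

Theorem lemma3 (R : realType) (S A : finType) (n T : nat)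
  (P : S -> A -> S -> R) (d0 : S -> R) (r : S -> A -> S -> R)
  (pi : 'rV[R]_n -> S -> A -> R) (term : S) (Rmax Lpi : R) :
  (forall s a s', 0 <= P s a s') ->
  (forall s a, \sum_(s' : S) P s a s' = 1) ->
  (forall s, 0 <= d0 s) ->
  \sum_(s : S) d0 s = 1 ->
  (forall s a s', `|r s a s'| <= Rmax) ->
  (forall a, P term a term = 1) ->
  (forall a s', r term a s' = 0) ->
  (forall th s a, 0 < pi th s a) ->
  (forall th s, \sum_(a : A) pi th s a = 1) ->
  (forall th s a, differentiable (fun th' => pi th' s a) th) ->
  (forall th s a, euclid (grad (fun th' => ln (pi th' s a)) th) <= Lpi) ->
  (* S_T is terminal *)
  (forall th, PrSt T P d0 pi th T term = 1) ->
  (* the conditional expectation defining V does not depend on t *)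
  (forall th g (t t' : nat) s, (t <= T)%N -> (t' <= T)%N ->
     0 < PrSt T P d0 pi th t s -> 0 < PrSt T P d0 pi th t' s ->
     condret T P d0 r pi th g t s = condret T P d0 r pi th g t' s) ->
  exists Le : R, forall g : R, 0 <= g <= 1 -> forall th : 'rV[R]_n,
    euclid (\sum_(s : S) Vg T P d0 r pi th g s *: grad (fun th' => dg T P d0 pi th' g s) th)
      <= (1 - g) * Le.

Proof.
move=> P0 P1 d00 d01 rB Pt rt pi0 pi1 pid piL _ _.
set L := `|Lpi|.
have L0 : 0 <= L by exact: normr_ge0.
have pile1 : forall th s a, pi th s a <= 1.
  move=> th s a; rewrite -(pi1 th s) (bigD1 a) //= lerDl sumr_ge0 // => b _.
  exact: ltW.
have Ple1 : forall s a s', P s a s' <= 1.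
  move=> s a s'; rewrite -(P1 s a) (bigD1 s') //= lerDl sumr_ge0 // => *; exact: P0.
have d0le1 : forall s, d0 s <= 1.
  move=> s; rewrite -d01 (bigD1 s) //= lerDl sumr_ge0 // => *; exact: d00.
have ent : forall (x : 'rV[R]_n) i, `|x ord0 i| <= euclid x.
  move=> x i; rewrite /euclid -sqrtr_sqr ler_sqrt ?sumr_ge0 // => [|j _];
    last exact: sqr_ge0.
  by rewrite (bigD1 i) //= lerDl sumr_ge0 // => j _; exact: sqr_ge0.
have Dpi : forall th s a i, DB (fun th' => pi th' s a) th (delta_mx 0 i) L.
  move=> th s a i; split; first exact: diff_derivable.
  have h : `|grad (fun th' => ln (pi th' s a)) th ord0 i| <= Lpi.
    exact: le_trans (ent _ i) (piL th s a).
  move: h; rewrite /grad mxE dln // => h.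
  have -> : 'D_(delta_mx 0 i) (fun th' => pi th' s a) th =
     pi th s a * ('D_(delta_mx 0 i) (fun th' => pi th' s a) th / pi th s a).
    by rewrite mulrCA mulfV ?mulr1 // gt_eqF.
  rewrite normrM ger0_norm; last exact: ltW.
  rewrite -[L]mul1r; apply: ler_pM => //; first exact: ltW.
  exact: le_trans (ler_norm _).
set Bp := (T.+1)%:R * L.
have Dpath : forall (th : 'rV[R]_n) (tau : traj S A T) (i : 'I_n),
    DB (fun th' => pathprob P d0 pi th' tau) th (delta_mx 0 i) Bp.
  move=> th tau i; rewrite /pathprob.
  apply: DB_le; last first.
    apply: (DB_mul (a:=1) (DB_cst _ _ _)
      (DB_prod (B := L) (F := fun (t : 'I_T.+1) y => pi y (st tau t) (ac tau t) *
               P (st tau t) (ac tau t) (st tau t.+1)) _ _ _)).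
    all: rewrite ?mulr_ge0 ?ler0n //.
    - move=> t; apply: DB_le; last first.
        apply: (DB_mul (a:=1) (b:=1) (Dpi th _ _ i) (DB_cst _ _ _)).
        all: try exact: lexx; try exact: L0.
        + by rewrite ger0_norm; [exact: pile1|exact: ltW].
        + by rewrite ger0_norm; [exact: Ple1|exact: P0].
      by rewrite !mul1r add0r.
    - move=> t; rewrite normrM -[1]mul1r; apply: ler_pM => //.
        by rewrite ger0_norm; [exact: pile1|exact: ltW].
      by rewrite ger0_norm; [exact: Ple1|exact: P0].
    - by rewrite ger0_norm; [exact: d0le1|exact: d00].
  by rewrite mulr0 addr0 mul1r.
set Bpr := \sum_(tau : traj S A T) Bp.
have DPr : forall th t s i,
    DB (fun th' => PrSt T P d0 pi th' t s) th (delta_mx 0 i) Bpr.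
  move=> th t s i; rewrite /PrSt /Bpr.
  apply: DB_sum => tau; apply: DB_le; last first.
    apply: (DB_mul (b:=1) (Dpath th tau i) (DB_cst _ _ _) (lexx _)).
    - by rewrite ger0_norm ?ler0n // lern1 leq_b1.
    - by rewrite mulr_ge0 // ler0n.
    - by [].
  by rewrite mulr0 add0r mul1r.
set BF := \sum_(t <- index_iota 1 T) Bpr.
have DF : forall th s i,
    DB (fun th' => \sum_(1 <= t < T) PrSt T P d0 pi th' t s) th (delta_mx 0 i) BF.
  by move=> th s i; apply: DB_sum => t; exact: DPr.
set K := `|Rmax| *+ T.+1.
have K0 : 0 <= K by rewrite mulrn_wge0.
have pp0 : forall (th : 'rV[R]_n) (tau : traj S A T), 0 <= pathprob P d0 pi th tau.
  move=> th tau; rewrite /pathprob; apply: mulr_ge0 => //.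
  apply: prodr_ge0 => t _; apply: mulr_ge0 => //; exact: ltW.
have Vb : forall th g s, 0 <= g <= 1 -> `|Vg T P d0 r pi th g s| <= K.
  move=> th g s /andP[g0 g1]; rewrite /Vg; case: pickP => [t Ht|_];
    last by rewrite normr0.
  rewrite /condret normrM normfV (gtr0_norm Ht) ler_pdivrMr //.
  rewrite /retSt /PrSt mulr_sumr.
  apply: le_trans (ler_norm_sum _ _ _) _; apply: ler_sum => tau _.
  have c0 : 0 <= pathprob P d0 pi th tau * (st tau t == s)%:R.
    by apply: mulr_ge0 => //; exact: ler0n.
  rewrite normrM (ger0_norm c0) [K * _]mulrC; apply: ler_wpM2l => //.
  apply: le_trans (ler_norm_sum _ _ _) _.
  apply: le_trans (_ : \sum_(t <= i0 < T.+1) `|Rmax| <= _).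
    apply: ler_sum => i0 _; rewrite normrM normrX (ger0_norm g0) -[`|Rmax|]mul1r.
    apply: ler_pM => //; first by rewrite exprn_ge0.
      exact: exprn_ile1.
    have := rB (st tau i0) (ac tau i0) (st tau i0.+1).
    move=> h; apply: le_trans h _; exact: ler_norm.
  by rewrite sumr_const_nat; apply: ler_wpMn2l => //; exact: leq_subr.
have Bp0 : 0 <= Bp by rewrite mulr_ge0 ?ler0n.
have BF0 : 0 <= BF by rewrite /BF /Bpr; apply: sumr_ge0 => t _; apply: sumr_ge0.
set M := \sum_(s : S) K * BF.
have M0 : 0 <= M by apply: sumr_ge0 => s _; rewrite mulr_ge0.
exists (M * Num.sqrt n%:R) => g /andP[g0 g1] th.
have g10 : 0 <= 1 - g by rewrite subr_ge0.
set X := \sum_(s : S) _.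
have Xi : forall i, `|X ord0 i| <= (1 - g) * M.
  move=> i; rewrite /X summxE /M mulr_sumr.
  apply: le_trans (ler_norm_sum _ _ _) _; apply: ler_sum => s _.
  rewrite mxE /grad mxE normrM.
  set F := fun y => \sum_(1 <= t < T) PrSt T P d0 pi y t s.
  have [dF1 dF2] := DF th s i.
  have Ddg : 'D_(delta_mx 0 i) (fun th' => dg T P d0 pi th' g s) th =
      (1 - g) * 'D_(delta_mx 0 i) F th.
    have -> : (fun th' => dg T P d0 pi th' g s) = cst (d0 s) + (1 - g) \*o F.
      by apply/funext => y.
    have dG : derivable ((1 - g) \*o F) th (delta_mx 0 i).
      have -> : (1 - g) \*o F = cst (1 - g) * F by apply/funext => y.
      exact: derivableM (derivable_cst _ _ _) dF1.
    rewrite (deriveD (derivable_cst _ _ _) dG).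
    by rewrite derive_cst add0r deriveMl.
  rewrite Ddg normrM (ger0_norm g10) mulrCA; apply: ler_wpM2l => //.
  apply: ler_pM => //; apply: Vb; by rewrite g0 g1.
rewrite /euclid.
apply: le_trans (_ : Num.sqrt (\sum_(i < n) ((1 - g) * M) ^+ 2) <= _).
  rewrite ler_sqrt; last by apply: sumr_ge0 => i _; exact: sqr_ge0.
  apply: ler_sum => i _.
  rewrite -(ger0_norm (sqr_ge0 (X ord0 i))) normrX !expr2.
  by apply: ler_pM => //; exact: Xi.
have -> : \sum_(i < n) ((1 - g) * M) ^+ 2 = ((1 - g) * M) ^+ 2 * n%:R.
  by rewrite sumr_const card_ord mulr_natr.
rewrite sqrtrM ?sqr_ge0 // sqrtr_sqr.
by rewrite ger0_norm ?mulr_ge0 // mulrA.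
Qed.
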